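(* Let $k\ge 2$, $m\in\{1,\dots,k-1\}$ and $\alpha\in(0,1)$. Let $\theta_1\ge\theta_2\ge\dots\ge\theta_k$ be real parameters, and let $(\hat{\mathcal S}_T)_{T\ge 0}$ be the sequence of sets produced by the Sequential Correct Screening (SCS) procedure described in the context, built from confidence processes $L_{iT}(\cdot),U_{iT}(\cdot)$ satisfying the time-uniform guarantee ( * ) and $L_{iT}(\beta)\le U_{iT}(\beta)$. Then: (a) $\mathbb P\big(\forall T\in\mathbb N:\ \hat{\mathcal S}_T\subseteq \hat{\mathcal S}_{T-1}\big)=1$. (b) If $\theta_m>\theta_{m+1}$ (so that $\mathcal S=\{1,\dots,m\}$), then $\mathbb P\big(\forall T\in\mathbb N:\ \mathcal S\subseteq\hat{\mathcal S}_T\big)\ge 1-\alpha$. (c) If $\theta_m>\theta_{m+1}$ and, in addition, for every $i\in[k]$ and every $\beta\in(0,1)$ we have $U_{iT}(\beta)\to\theta_i$ and $L_{iT}(\beta)\to\theta_i$ in probability as $T\to\infty$, then $\mathbb P\big(\exists T_0\in\mathbb N\ \forall T\ge T_0:\ \hat{\mathcal S}_T=\mathcal S\big)\ge 1-\alpha$.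
   Context: Setting: $(\Omega,\mathcal F,\mathbb P)$ is a probability space with a filtration $(\mathcal F_T)_{T\in\mathbb N}$, $\mathbb N=\{1,2,\dots\}$, and $[k]=\{1,\dots,k\}$. The $m$-promising set is $\mathcal S=\{i\in[k]:\theta_i\ge\theta_m\}$. For each $i\in[k]$ and each $\beta\in(0,1)$, we are given two $(\mathcal F_T)$-adapted processes $(L_{iT}(\beta))_{T\in\mathbb N}$ and $(U_{iT}(\beta))_{T\in\mathbb N}$ with values in $[-\infty,\infty]$, such that $L_{iT}(\beta)\le U_{iT}(\beta)$ for all $T$, and satisfying the time-uniform guarantee ( * ) $\mathbb P(\exists T\in\mathbb N:\theta_i\le L_{iT}(\beta))\le\beta$ and $\mathbb P(\exists T\in\mathbb N:\theta_i\ge U_{iT}(\beta))\le\beta$. No assumption is made on the dependence between the processes for different $i$. SCS procedure: set $\alpha_{km}=\alpha/\{2m(k-m)\}$ and $\hat{\mathcal S}_0=[k]$. For $T\in\mathbb N$, let $L^{(m)}_T(\alpha_{km})$ be the $m$-th largest value (counting multiplicity) among $\{L_{iT}(\alpha_{km}):i\in\hat{\mathcal S}_{T-1}\}$, and set $\hat{\mathcal S}_T=\hat{\mathcal S}_{T-1}\setminus\{i\in\hat{\mathcal S}_{T-1}:U_{iT}(\alpha_{km})<L^{(m)}_T(\alpha_{km})\}$. (Under $L\le U$, this keeps $|\hat{\mathcal S}_T|\ge m$ for all $T$, so the $m$-th largest value is always defined.) *)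

(* Defs.v *)
From HB Require Import structures.
From mathcomp Require Import all_boot all_order all_algebra.
From mathcomp Require Import all_classical all_reals all_analysis measurable_realfun.
Set Implicit Arguments. Unset Strict Implicit. Unset Printing Implicit Defensive.
Import Order.TTheory GRing.Theory Num.Theory.
Local Open Scope ring_scope.

Definition mth_largest (R : realType) (m : nat) (s : seq (\bar R)) : \bar R :=
  nth -oo%E (sort (fun x y => (y <= x)%O) s) m.-1.

(* m-promising set {i : theta_i >= theta_(m)}; indices are 0-based, so the
   paper's theta_j is theta (j-1) here. *)
Definition promising (R : realType) (k m : nat) (theta : nat -> R) : {set 'I_k} :=
  [set i : 'I_k | theta m.-1 <= theta i].

Fixpoint SCS d (Omega : measurableType d) (R : realType) (k m : nat)
  (L U : 'I_k -> R -> nat -> Omega -> \bar R) (a : R) (T : nat) (w : Omega)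
  : {set 'I_k} :=
  match T with
  | 0 => [set: 'I_k]
  | T'.+1 =>
      let S := SCS m L U a T' w in
      let Lm := mth_largest m [seq L i a T'.+1 w | i <- enum S] in
      [set i in S | ~~ (U i a T'.+1 w < Lm)%E]
  end.

Definition alpha_km (R : realType) (k m : nat) (alpha : R) : R :=
  alpha / (2 * m%:R * (k - m)%:R).

Local Open Scope classical_set_scope.

(* A filtration (F_T)_{T >= 1} of sub-sigma-algebras of the measurable sets
   (the index T = 0 is unused). *)
Definition is_filtration d (Omega : measurableType d) (F : nat -> set (set Omega)) :=
  (forall T, (1 <= T)%N -> sigma_algebra setT (F T)) /\
  (forall T, (1 <= T)%N -> F T `<=` measurable) /\
  (forall T, (1 <= T)%N -> F T `<=` F T.+1).

Definition adapted d (Omega : measurableType d) (R : realType)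
  (F : nat -> set (set Omega)) (X : nat -> Omega -> \bar R) :=
  forall T, (1 <= T)%N -> forall B : set (\bar R), measurable B -> F T (X T @^-1` B).

Definition cvg_in_prob d (Omega : measurableType d) (R : realType)
  (P : probability Omega R) (X : nat -> Omega -> \bar R) (c : R) :=
  forall eps : R, 0 < eps ->
    (fun T => P [set w | (eps%:E < `| X T w - c%:E |)%E]) @ \oo --> 0%E.

(* Main.v *)
Require Import Defs.
From HB Require Import structures.
From mathcomp Require Import all_boot all_order all_algebra.
From mathcomp Require Import all_classical all_reals all_analysis measurable_realfun.
From mathcomp Require Import ring lra zify.
Set Implicit Arguments. Unset Strict Implicit.
Import Order.TTheory GRing.Theory Num.Theory.
Local Open Scope classical_set_scope.
Local Open Scope ring_scope.

Section S.
Variable R : realType.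
Local Open Scope ereal_scope.

Lemma sorted_ge_nth (x : \bar R) (t : seq (\bar R)) :
  sorted (fun a b => (b <= a)%O) t -> forall n,
  (x < nth -oo t n) = (n < count (fun y => (x < y)%E) t)%N.
Proof.
elim: t => [|y t IH] /=.
  by move=> _ n; rewrite nth_nil ltNge leNye.
move=> Hp.
have Ht : sorted (fun a b => (b <= a)%O) t by apply: (path_sorted Hp).
have Hall : all (fun b => (b <= y)%O) t.
  apply: (order_path_min _ Hp) => b a c hab hbc; exact: le_trans hbc hab.
case: (ltP x y) => Hxy.
  by case=> [|n] /=; rewrite ?Hxy // (IH Ht).
have H0 : count (fun y0 => (x < y0)%E) t = 0%N.
  apply/eqP; rewrite -leqn0 leqNgt -has_count; apply/hasPn => z zt.
  by rewrite -leNgt; apply: le_trans Hxy; move/allP: Hall => /(_ z zt).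
case=> [|n] /=; first by rewrite H0; apply/negbTE; rewrite -leNgt.
by rewrite (IH Ht) H0.
Qed.

Lemma lt_mth (m : nat) (x : \bar R) (s : seq (\bar R)) : (1 <= m)%N ->
  (x < mth_largest m s) = (m <= count (fun y => (x < y)%E) s)%N.
Proof.
move=> hm; rewrite /mth_largest sorted_ge_nth; last first.
  by apply: sort_sorted => a b; rewrite orbC le_total.
have /permP -> := permEl (perm_sort (fun a b => (b <= a)%O) s).
by rewrite -{2}(prednK hm).
Qed.
End S.
Section M.
Variables (d : measure_display) (Omega : measurableType d).

Lemma meas_bool (p : Omega -> bool) (g : bool -> bool) :
  measurable [set w | p w] -> measurable [set w | g (p w)].
Proof.
move=> mp.
case gt: (g true); case gf: (g false).
- suff -> : [set w | g (p w)] = setT by exact: measurableT.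
  by apply/seteqP; split => w //= _; case: (p w).
- suff -> : [set w | g (p w)] = [set w | p w] by [].
  by apply/seteqP; split => w /=; case: (p w); rewrite ?gt ?gf.
- suff -> : [set w | g (p w)] = ~` [set w | p w] by exact: measurableC.
  by apply/seteqP; split => w /=; case: (p w); rewrite ?gt ?gf.
- suff -> : [set w | g (p w)] = set0 by exact: measurable0.
  by apply/seteqP; split => w //=; case: (p w); rewrite ?gt ?gf.
Qed.

Lemma meas_exists_seq (I : eqType) (A : I -> set Omega) (r : seq I) :
  (forall i, measurable (A i)) -> measurable [set w | exists2 i, i \in r & A i w].
Proof.
move=> mA; elim: r => [|i r IH].
  suff -> : [set w | exists2 i, i \in [::] & A i w] = set0 by exact: measurable0.
  by apply/seteqP; split => w //= [].
suff -> : [set w | exists2 j, j \in i :: r & A j w] =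
  A i `|` [set w | exists2 j, j \in r & A j w] by exact: measurableU.
apply/seteqP; split => w /=.
  by move=> [j]; rewrite inE => /orP[/eqP ->|jr Aj]; [left|right; exists j].
case=> [Ai|[j jr Aj]]; first by exists i; rewrite ?mem_head.
by exists j; rewrite // inE jr orbT.
Qed.

Lemma meas_exists (I : finType) (A : I -> set Omega) :
  (forall i, measurable (A i)) -> measurable [set w | exists i, A i w].
Proof.
move=> mA.
suff -> : [set w | exists i, A i w] = [set w | exists2 i, i \in enum I & A i w].
  exact: meas_exists_seq.
apply/seteqP; split => w /= [i]; last by exists i.
by move=> Ai; exists i; rewrite ?mem_enum.
Qed.

Lemma meas_forall (I : finType) (A : I -> set Omega) :
  (forall i, measurable (A i)) -> measurable [set w | forall i, A i w].
Proof.
move=> mA.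
suff -> : [set w | forall i, A i w] = ~` [set w | exists i, (~` A i) w].
  by apply: measurableC; apply: meas_exists => i; apply: measurableC.
apply/seteqP; split => w /=.
  by move=> H [i]; apply; apply: H.
move=> H i; apply: contrapT => nA; apply: H; by exists i.
Qed.

Lemma meas_count (I : Type) (f : I -> Omega -> bool) (r : seq I) :
  (forall i, measurable [set w | f i w]) ->
  forall n, measurable [set w | (n <= count (fun j => f j w) r)%N].
Proof.
move=> mf; elim: r => [|i r IH] n /=.
  have := @meas_bool (fun _ => false) (fun b => (n <= b)%N).
  apply; rewrite [X in measurable X](_ : _ = set0) //.
  by apply/seteqP; split.
suff -> : [set w | (n <= f i w + count (fun j => f j w) r)%N] =
  ([set w | f i w] `&` [set w | (n.-1 <= count (fun j => f j w) r)%N]) `|`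
  (~` [set w | f i w] `&` [set w | (n <= count (fun j => f j w) r)%N]).
  by apply: measurableU; apply: measurableI => //; apply: measurableC.
apply/seteqP; split => w /=.
  case: (f i w) => /=; last by right.
  by rewrite add1n => h; left; split => //; case: n h.
case=> [[-> h]|[/negP/negbTE -> h]] //=.
by rewrite add1n; case: n h => //= n h; apply: leq_trans h _.
Qed.

End M.

Section SCSmeas.
Variables (d : measure_display) (Omega : measurableType d) (R : realType).
Variables (k m : nat) (L U : 'I_k -> R -> nat -> Omega -> \bar R) (a : R).
Hypothesis hm : (1 <= m)%N.
Hypothesis HLm : forall i T, (1 <= T)%N -> measurable_fun setT (L i a T).
Hypothesis HUm : forall i T, (1 <= T)%N -> measurable_fun setT (U i a T).

Lemma meas_lt (f g : Omega -> \bar R) : measurable_fun setT f -> measurable_fun setT g ->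
  measurable [set w | (f w < g w)%E].
Proof.
move=> mf mg; have := measurable_lte measurableT mf mg.
by rewrite setTI.
Qed.

Lemma SCS_step T w : SCS m L U a T.+1 w =
  [set i in SCS m L U a T w | ~~ (m <= count (fun j => (U i a T.+1 w < L j a T.+1 w)%E)
                                         (enum (SCS m L U a T w)))%N].
Proof.
rewrite /=; apply/setP => i; rewrite !inE lt_mth // count_map //.
Qed.

Lemma meas_SCS T (s : {set 'I_k}) : measurable [set w | SCS m L U a T w = s].
Proof.
elim: T s => [|T IH] s'.
  have := @meas_bool d Omega (fun _ => true) (fun b => ([set: 'I_k]%SET == s')).
  have -> : [set _ : Omega | true] = setT by apply/seteqP; split.
  move=> /(_ measurableT).
  by congr measurable; apply/seteqP; split => w /=; [move/eqP|move=> ->].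
suff -> : [set w | SCS m L U a T.+1 w = s'] =
  [set w | exists s : {set 'I_k}, ([set w | SCS m L U a T w = s] `&`
     [set w | forall i : 'I_k, ((i \in s) && ~~ (m <= count (fun j => (U i a T.+1 w < L j a T.+1 w)%E)
                                         (enum s))%N) == (i \in s')]) w].
  apply: meas_exists => s; apply: measurableI => //.
  apply: meas_forall => i.
  apply: (@meas_bool d Omega (fun w => (m <= count (fun j => (U i a T.+1 w < L j a T.+1 w)%E) (enum s))%N)
           (fun b => ((i \in s) && ~~ b) == (i \in s'))).
  apply: meas_count => j; apply: meas_lt; [exact: HUm|exact: HLm].
apply/seteqP; split => w; move: (SCS_step T w) => /= ->.
  move=> <-; exists (SCS m L U a T w); split => // i.
  by rewrite inE.
move=> [s [Hs H]]; apply/setP => i; rewrite -(eqP (H i)) inE Hs //.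
Qed.
End SCSmeas.

Section Prob.
Variables (d : measure_display) (Omega : measurableType d) (R : realType).
Variable P : probability Omega R.
Local Open Scope ereal_scope.

Lemma union_bound (I : eqType) (A : I -> set Omega) (r : seq I) (c : R) :
  (forall i, measurable (A i)) -> (forall i, P (A i) <= c%:E) ->
  P [set w | exists2 i, i \in r & A i w] <= ((size r)%:R * c)%:E.
Proof.
move=> mA hA; elim: r => [|i r IH].
  rewrite [X in P X](_ : _ = set0); last by apply/seteqP; split => w //= [].
  by rewrite measure0 mul0r.
rewrite [X in P X](_ : _ = A i `|` [set w | exists2 j, j \in r & A j w]); last first.
  apply/seteqP; split => w /=.
    by move=> [j]; rewrite inE => /orP[/eqP ->|jr Aj]; [left|right; exists j].
  case=> [Ai|[j jr Aj]]; first by exists i; rewrite ?mem_head.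
  by exists j; rewrite // inE jr orbT.
apply: le_trans (measureU2 _ _ _) _ => //; first exact: meas_exists_seq.
rewrite /= -addn1 natrD mulrDl mul1r EFinD addeC.
by apply: leeD.
Qed.

Lemma bound_compl (X : set Omega) (c alpha : R) : measurable X ->
  P X <= c%:E -> (c <= alpha)%R -> (1 - alpha)%:E <= P (~` X).
Proof.
move=> mX hX hc; rewrite probability_setC // EFinB.
apply: leeB => //; apply: le_trans hX _; by rewrite lee_fin.
Qed.

Lemma le0_of_small (x : \bar R) : (forall e : R, (0 < e)%R -> x <= e%:E) -> x <= 0.
Proof. by move=> H; apply/lee_addgt0Pr => e he; rewrite add0e; apply: H. Qed.

Lemma near_small (f : nat -> \bar R) (del : R) : f @ \oo --> 0 -> (0 < del)%R ->
  \forall n \near \oo, f n <= del%:E.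
Proof.
move=> /fine_cvgP [hfin hcvg] hdel.
have hn := (proj1 (cvgrPdist_le _ _) hcvg) del hdel.
near=> n.
have fn : f n \is a fin_num by near: n; exact: hfin.
have : (`|0 - fine (f n)| <= del)%R by near: n; exact: hn.
rewrite sub0r normrN => h.
rewrite -(fineK fn) lee_fin; apply: le_trans h; exact: ler_norm.
Unshelve. all: end_near.
Qed.
End Prob.

Section Comb.
Variables (d : measure_display) (Omega : measurableType d) (R : realType).
Variables (k m : nat) (L U : 'I_k -> R -> nat -> Omega -> \bar R) (a : R).
Hypothesis hm : (1 <= m)%N.

Lemma SCS_sub T w : SCS m L U a T.+1 w \subset SCS m L U a T w.
Proof. rewrite SCS_step //; apply/fintype.subsetP => i; by rewrite inE => /andP[]. Qed.

Lemma SCS_mono T1 T2 w : (T1 <= T2)%N -> SCS m L U a T2 w \subset SCS m L U a T1 w.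
Proof.
elim: T2 => [|T2 IH]; first by rewrite leqn0 => /eqP ->.
rewrite leq_eqVlt => /orP[/eqP -> //|]; rewrite ltnS => h.
exact: fintype.subset_trans (SCS_sub T2 w) (IH h).
Qed.

Lemma meas_SCS_pred (HLm : forall i T, (1 <= T)%N -> measurable_fun setT (L i a T))
  (HUm : forall i T, (1 <= T)%N -> measurable_fun setT (U i a T))
  T (q : {set 'I_k} -> Prop) : measurable [set w | q (SCS m L U a T w)].
Proof.
suff -> : [set w | q (SCS m L U a T w)] =
   [set w | exists s : {set 'I_k}, (if pselect (q s) then [set w | SCS m L U a T w = s] else set0) w].
  apply: meas_exists => s; case: (pselect (q s)) => qs; last exact: measurable0.
  exact: meas_SCS.
apply/seteqP; split => w /=.
  by move=> h; exists (SCS m L U a T w); case: (pselect (q (SCS m L U a T w))).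
by move=> [s]; case: (pselect (q s)) => //= qs ->.
Qed.
End Comb.

Lemma count_enum_le (k : nat) (A B : {set 'I_k}) (p : pred 'I_k) :
  (forall j, j \in A -> p j -> j \in B) -> (count p (enum A) <= #|B|)%N.
Proof.
move=> H; rewrite -size_filter cardE.
apply: uniq_leq_size; first by apply: filter_uniq; exact: enum_uniq.
move=> j; rewrite mem_filter mem_enum => /andP[pj jA]; rewrite mem_enum; exact: H.
Qed.

Lemma count_enum_ge (k : nat) (A B : {set 'I_k}) (p : pred 'I_k) :
  B \subset A -> (forall j, j \in B -> p j) -> (#|B| <= count p (enum A))%N.
Proof.
move=> sBA H; rewrite -size_filter cardE.
apply: uniq_leq_size; first exact: enum_uniq.
move=> j; rewrite mem_enum => jB; rewrite mem_filter mem_enum H //=.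
exact: (fintype.subsetP sBA).
Qed.

Lemma card_lt (k m : nat) : (m <= k)%N -> #|[set i : 'I_k | (i < m)%N]%SET| = m.
Proof.
move=> hmk.
have -> : [set i : 'I_k | (i < m)%N]%SET = [set widen_ord hmk x | x in 'I_m]%SET.
  apply/setP => i; rewrite inE; apply/idP/imsetP.
    by move=> him; exists (Ordinal him) => //; apply: val_inj.
  by case=> x _ ->; rewrite /= ltn_ord.
rewrite card_imset ?card_ord //.
by move=> x y /(congr1 val) /= /val_inj.
Qed.

Lemma close_val (R : realType) (x : \bar R) (c eps : R) :
  ~ (eps%:E < `|x - c%:E|)%E -> exists r, x = r%:E /\ (c - eps <= r <= c + eps).
Proof.
case: x => [r| |] /= h.
- exists r; split => //.
  move: h; rewrite lte_fin => /negP; rewrite -leNgt ler_norml => /andP[h1 h2].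
  apply/andP; split; lra.
- by exfalso; apply: h; rewrite ltey.
- by exfalso; apply: h; rewrite ltey.
Qed.

Section M2.
Variables (d : measure_display) (Omega : measurableType d) (R : realType).

Lemma meas_exT (Q : nat -> set Omega) : (forall T, (1 <= T)%N -> measurable (Q T)) ->
  measurable [set w | exists T, (1 <= T)%N /\ Q T w].
Proof.
move=> mQ.
suff -> : [set w | exists T, (1 <= T)%N /\ Q T w] =
  \bigcup_T (if (1 <= T)%N then Q T else set0).
  apply: bigcupT_measurable => -[|T] /=; first exact: measurable0.
  exact: mQ.
apply/seteqP; split => w /=.
  by move=> [T [hT QT]]; exists T => //; rewrite hT.
by move=> [T _]; case: ifP => // hT QT; exists T.
Qed.

Lemma meas_le (f g : Omega -> \bar R) : measurable_fun setT f -> measurable_fun setT g ->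
  measurable [set w | (f w <= g w)%E].
Proof.
move=> mf mg.
suff -> : [set w | (f w <= g w)%E] = ~` [set w | (g w < f w)%E].
  by apply: measurableC; apply: meas_lt.
by apply/seteqP; split => w /=; rewrite leNgt => /negP.
Qed.
End M2.


Unset Implicit Arguments. Set Strict Implicit.
Local Open Scope classical_set_scope.
Local Open Scope ring_scope.

Theorem theorem1 (R : realType) (d : measure_display) (Omega : measurableType d)
  (P : probability Omega R) (F : nat -> set (set Omega))
  (k m : nat) (alpha : R) (theta : nat -> R)
  (L U : 'I_k -> R -> nat -> Omega -> \bar R) :
  (2 <= k)%N -> (1 <= m)%N -> (m <= k - 1)%N -> 0 < alpha < 1 ->
  (forall i j : nat, (i <= j)%N -> (j < k)%N -> theta j <= theta i) ->
  is_filtration F ->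
  (forall (i : 'I_k) (beta : R), 0 < beta < 1 ->
     adapted F (L i beta) /\ adapted F (U i beta)) ->
  (forall (i : 'I_k) (beta : R) (T : nat) (w : Omega), 0 < beta < 1 ->
     (L i beta T w <= U i beta T w)%E) ->
  (forall (i : 'I_k) (beta : R), 0 < beta < 1 ->
     (P [set w | exists T, (1 <= T)%N /\ ((theta i)%:E <= L i beta T w)%E]
        <= beta%:E)%E /\
     (P [set w | exists T, (1 <= T)%N /\ ((theta i)%:E >= U i beta T w)%E]
        <= beta%:E)%E) ->
  let Shat := SCS m L U (alpha_km k m alpha) in
  let S := promising k m theta in
  (* (a) *)
  P [set w | forall T, (1 <= T)%N -> Shat T w \subset Shat T.-1 w] = 1%E /\
  (* (b) *)
  (theta m < theta m.-1 ->
     ((1 - alpha)%:E <= P [set w | forall T, (1 <= T)%N -> S \subset Shat T w])%E) /\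
  (* (c) *)
  (theta m < theta m.-1 ->
   (forall (i : 'I_k) (beta : R), 0 < beta < 1 ->
      cvg_in_prob P (U i beta) (theta i) /\ cvg_in_prob P (L i beta) (theta i)) ->
     ((1 - alpha)%:E <=
        P [set w | exists T0, (1 <= T0)%N /\ forall T, (T0 <= T)%N -> Shat T w = S])%E).
Proof.
move=> hk hm hmk halpha hmono hF hadapt hLU hprob Shat S.
set a := alpha_km k m alpha.
have hmk' : (m < k)%N by move: hk hmk; clear; lia.
have hmR : 1 <= (m%:R : R) by rewrite ler1n.
have hnR : 1 <= ((k - m)%:R : R) by rewrite ler1n subn_gt0.
have hkR : (k%:R : R) = m%:R + (k - m)%:R by rewrite -natrD subnKC // ltnW.
have ha : 0 < a < 1.
  case/andP: halpha => h0 h1.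
  rewrite /a /alpha_km; apply/andP; split.
    by apply: divr_gt0 => //; apply: mulr_gt0; [apply: mulr_gt0|]; lra.
  rewrite ltr_pdivrMr; last by apply: mulr_gt0; [apply: mulr_gt0|]; lra.
  nra.
have hka : k%:R * a <= alpha.
  case/andP: halpha => h0 h1.
  rewrite /a /alpha_km mulrA ler_pdivrMr; last by apply: mulr_gt0; [apply: mulr_gt0|]; lra.
  have hxy : (m%:R : R) + (k - m)%:R <= 2 * m%:R * (k - m)%:R by nra.
  rewrite hkR; nra.
have HLm : forall i T, (1 <= T)%N -> measurable_fun setT (L i a T).
  move=> i T hT _ B mB; rewrite setTI; apply: (hF.2.1 T hT).
  exact: ((hadapt i a ha).1 T hT B mB).
have HUm : forall i T, (1 <= T)%N -> measurable_fun setT (U i a T).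
  move=> i T hT _ B mB; rewrite setTI; apply: (hF.2.1 T hT).
  exact: ((hadapt i a ha).2 T hT B mB).
have Hstep := @SCS_step d Omega R k m L U a hm.
have Hsub := @SCS_sub d Omega R k m L U a hm.
have Hmono := @SCS_mono d Omega R k m L U a hm.
have HmeasP := @meas_SCS_pred d Omega R k m L U a hm HLm HUm.
split.
  rewrite [X in P X](_ : _ = setT) ?probability_setT //.
  by apply/seteqP; split => w // _ [|T] //= _; apply: Hsub.
have HS : theta m < theta m.-1 -> forall i : 'I_k, (i \in S) = (i < m)%N.
  move=> gap i; rewrite inE; apply/idP/idP.
    move=> h; rewrite ltnNge; apply/negP => him.
    have := hmono m i him (ltn_ord i); lra.
  move=> him; apply: hmono; first by rewrite -ltnS prednK.
  by move: hmk'; clear -hm; lia.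
have cardS : theta m < theta m.-1 -> #|S| = m.
  move=> gap.
  have -> : S = [set i : 'I_k | (i < m)%N]%SET.
    by apply/finset.setP => i; rewrite HS // inE.
  exact: (@card_lt k m (ltnW hmk')).
pose C (i : 'I_k) : set Omega := if (i < m)%N then
    [set w | exists T, (1 <= T)%N /\ ((theta i)%:E >= U i a T w)%E]
  else [set w | exists T, (1 <= T)%N /\ ((theta i)%:E <= L i a T w)%E].
have mC : forall i, measurable (C i).
  move=> i; rewrite /C; case: ifP => _; apply: meas_exT => T hT; apply: meas_le;
    by [apply: HUm | apply: HLm | apply: measurable_cst].
have PC : forall i, (P (C i) <= a%:E)%E.
  by move=> i; rewrite /C; case: ifP => _; [exact: (hprob i a ha).2 | exact: (hprob i a ha).1].
pose Ec := [set w | exists i, C i w].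
have mEc : measurable Ec := meas_exists mC.
have PEc : (P Ec <= (k%:R * a)%:E)%E.
  rewrite [X in P X](_ : _ = [set w | exists2 i, i \in enum 'I_k & C i w]).
    by have := @union_bound _ _ _ P _ C (enum 'I_k) a mC PC; rewrite size_enum_ord.
  apply/seteqP; split => w /= [i]; last by exists i.
  by move=> Ci; exists i; rewrite ?mem_enum.
have HEc : theta m < theta m.-1 -> forall w, ~ Ec w -> forall T, S \subset Shat T w.
  move=> gap w nE; elim=> [|T IH]; first by rewrite /Shat /= finset.subsetT.
  apply/fintype.subsetP => i iS.
  rewrite /Shat Hstep inE (fintype.subsetP IH i iS) /= -ltnNge.
  have ltm : (#|S :\ i| < m)%N.
    by have := cardS gap; rewrite (cardsD1 i S) iS /=; clear; lia.
  apply: leq_ltn_trans ltm; apply: count_enum_le => j _ hj.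
  rewrite !inE; apply/andP; split.
    apply/eqP => eji; subst j; move: hj; rewrite ltNge.
    by rewrite (hLU i a T.+1 w ha).
  apply/negPn/negP => jS.
  have iltm : (i < m)%N by rewrite -(HS gap i).
  have jgem : ~~ (j < m)%N by rewrite -(HS gap j) inE.
  have hi : ((theta i)%:E < U i a T.+1 w)%E.
    rewrite ltNge; apply/negP => h; apply: nE; exists i; rewrite /C iltm; exists T.+1.
    by split.
  have hj' : (L j a T.+1 w < (theta j)%:E)%E.
    rewrite ltNge; apply/negP => h; apply: nE; exists j; rewrite /C (negbTE jgem); exists T.+1.
    by split.
  have tij : theta j < theta i.
    have mj : (m <= j)%N by rewrite leqNgt.
    have h1 := hmono m j mj (ltn_ord j).
    have h2 : theta m.-1 <= theta i by move: iS; rewrite inE.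
    lra.
  have := lt_trans (lt_trans hj' (tij : ((theta j)%:E < (theta i)%:E)%E)) hi.
  by rewrite ltNge (ltW hj).
have mtb : measurable [set w | forall T, (1 <= T)%N -> S \subset Shat T w].
  rewrite [X in measurable X](_ : _ = \bigcap_T [set w | (1 <= T)%N -> S \subset Shat T w]).
    by apply: bigcapT_measurable => T; exact: (HmeasP T (fun s => (1 <= T)%N -> S \subset s)).
  by apply/seteqP; split => w /= H T; [move=> _|]; apply: H.
split.
  move=> gap.
  apply: le_trans (bound_compl mEc PEc hka) _.
  apply: le_measure; rewrite ?inE //; first exact: measurableC.
  by move=> w nE T _; apply: HEc.
move=> gap hcvg.
set eps := (theta m.-1 - theta m) / 3.
have heps : 0 < eps by rewrite /eps; lra.
pose Dev (i : 'I_k) T := [set w | (eps%:E < `|L i a T w - (theta i)%:E|)%E] `|`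
                        [set w | (eps%:E < `|U i a T w - (theta i)%:E|)%E].
have mLd : forall i T, (1 <= T)%N ->
    measurable [set w | (eps%:E < `|L i a T w - (theta i)%:E|)%E].
  move=> i T hT; apply: meas_lt; first exact: measurable_cst.
  apply: measurableT_comp; first exact: abse_measurable.
  by apply: emeasurable_funB; [apply: HLm|exact: measurable_cst].
have mUd : forall i T, (1 <= T)%N ->
    measurable [set w | (eps%:E < `|U i a T w - (theta i)%:E|)%E].
  move=> i T hT; apply: meas_lt; first exact: measurable_cst.
  apply: measurableT_comp; first exact: abse_measurable.
  by apply: emeasurable_funB; [apply: HUm|exact: measurable_cst].
have mDev : forall i T, (1 <= T)%N -> measurable (Dev i T).
  by move=> i T hT; apply: measurableU; [exact: mLd|exact: mUd].
pose Bad := [set w | forall T, (1 <= T)%N -> exists i, Dev i T w].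
have mBad : measurable Bad.
  rewrite [X in measurable X](_ : _ = \bigcap_T [set w | (1 <= T)%N -> exists i, Dev i T w]); last first.
    by apply/seteqP; split => w /= H T; [move=> _|]; apply: H.
  apply: bigcapT_measurable => -[|T].
    rewrite [X in measurable X](_ : _ = setT) //; by apply/seteqP; split.
  rewrite [X in measurable X](_ : _ = [set w | exists i, Dev i T.+1 w]).
    by apply: meas_exists => i; exact: mDev.
  by apply/seteqP; split => w /=; [apply|move=> H _].
have PBad : P Bad = 0%E.
  apply/eqP; rewrite eq_le measure_ge0 andbT; apply: le0_of_small => e he.
  have k0 : (0 < k%:R :> R) by rewrite ltr0n; move: hk; clear; lia.
  set del := e / (2 * k%:R).
  have hdel : 0 < del by rewrite /del; apply: divr_gt0 => //; lra.
  have Hnear : \forall T \near \oo, forall i : 'I_k,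
      (P [set w | (eps%:E < `|L i a T w - (theta i)%:E|)%E] <= del%:E)%E /\
      (P [set w | (eps%:E < `|U i a T w - (theta i)%:E|)%E] <= del%:E)%E.
    apply: filter_forall => i.
    have [cU cL] := hcvg i a ha.
    have h1 := near_small (cL eps heps) hdel.
    have h2 := near_small (cU eps heps) hdel.
    by apply: filterS2 h1 h2 => T.
  case: Hnear => N _ HN.
  pose T := maxn N 1.
  have hT : (1 <= T)%N by rewrite leq_maxr.
  have HTi := HN T (leq_maxl N 1).
  apply: (@le_trans _ _ (P [set w | exists2 i, i \in enum 'I_k & Dev i T w])).
    apply: le_measure; rewrite ?inE //.
      by apply: meas_exists_seq => i; exact: mDev.
    by move=> w Bw; have [i Di] := Bw T hT; exists i; rewrite ?mem_enum.
  have UB : forall i, (P (Dev i T) <= (del + del)%:E)%E.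
    move=> i; apply: le_trans (measureU2 _ _ _) _; [exact: mLd|exact: mUd|].
    by rewrite EFinD; apply: leeD; [exact: (HTi i).1|exact: (HTi i).2].
  have := @union_bound _ _ _ P _ (fun i => Dev i T) (enum 'I_k) (del + del) (fun i => mDev i T hT) UB.
  move/le_trans; apply.
  rewrite size_enum_ord lee_fin /del.
  have -> : k%:R * (e / (2 * k%:R) + e / (2 * k%:R)) = e.
    field; rewrite gt_eqF //.
  by [].
have mX : measurable (Ec `|` Bad) by apply: measurableU.
have PX : (P (Ec `|` Bad) <= (k%:R * a)%:E)%E.
  apply: le_trans (measureU2 _ mEc mBad) _.
  rewrite -[X in (_ <= X)%E]adde0; apply: leeD => //.
  by move/eqP: PBad; rewrite eq_le => /andP[].
apply: le_trans (bound_compl mX PX hka) _.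
have mtc : measurable [set w | exists T0, (1 <= T0)%N /\ forall T, (T0 <= T)%N -> Shat T w = S].
  rewrite [X in measurable X](_ : _ = \bigcup_T0 \bigcap_T
     [set w | (1 <= T0)%N /\ ((T0 <= T)%N -> Shat T w = S)]).
    apply: bigcupT_measurable => T0; apply: bigcapT_measurable => T.
    exact: (HmeasP T (fun s => (1 <= T0)%N /\ ((T0 <= T)%N -> s = S))).
  apply/seteqP; split => w /=.
    by move=> [T0 [h1 h2]]; exists T0 => // T _; split => //; apply: h2.
  move=> [T0 _ H]; exists T0; split; first exact: (H 0%N I).1.
  by move=> T hT; apply: (H T I).2.
apply: le_measure; rewrite ?inE //; first exact: measurableC.
move=> w /= nX.
have nE : ~ Ec w by move=> h; apply: nX; left.
have nB : ~ Bad w by move=> h; apply: nX; right.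
have [T1 [hT1 HT1]] : exists T, (1 <= T)%N /\ forall i, ~ Dev i T w.
  apply: contrapT => H; apply: nB => T hT; apply: contrapT => H2; apply: H.
  by exists T; split => // i Di; apply: H2; exists i.
exists T1; split => // T hT.
apply/eqP; rewrite finset.eqEsubset; apply/andP; split; last exact: HEc.
apply: fintype.subset_trans (Hmono _ _ w hT) _.
case: T1 hT1 HT1 {hT} => // T' _ HT1.
apply/fintype.subsetP => j; rewrite /Shat Hstep inE => /andP[jin hc].
apply/negPn/negP => jS; move: hc; apply/negP; rewrite negbK.
rewrite -{1}(cardS gap); apply: count_enum_ge; first exact: HEc.
move=> i iS.
have iltm : (i < m)%N by rewrite -(HS gap i).
have mj : (m <= j)%N by rewrite leqNgt -(HS gap j).
have [u [Hu bu]] := close_val (fun h => HT1 j (or_intror h)).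
have [l [Hl bl]] := close_val (fun h => HT1 i (or_introl h)).
rewrite Hu Hl lte_fin.
have h1 := hmono m j mj (ltn_ord j).
have h2 : theta m.-1 <= theta i by move: iS; rewrite inE.
move: bu bl; rewrite /eps => /andP[? ?] /andP[? ?]; lra.
Qed.
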